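(* There exists a constant $C>0$, independent of $n$, such that for all sufficiently large $n$, \[ \zeta_n< C+\frac{\min\{1-\beta,\alpha\}}{\lambda_1}\log n . \]
   Context: Fix constants $r_0,d_0\ge 0$ with $\lambda_0:=r_0-d_0<0$, $d_1>0$, $k>1$, $\alpha\in(0,1)$, $\beta\in(0,1)$. Let $f:[0,\infty)^2\to[0,\infty)$ satisfy: (A1) $f$ is Lipschitz continuous; (A2) $f(x,y)=r_1$ when $x+y=0$ and $f(x,y)=d_1$ when $x+y=1$, where $r_1:=f(0,0)>d_1$; (A3) $f(x,y)=\Phi(x+y)$ for some non-increasing function $\Phi:[0,\infty)\to[0,\infty)$; (A4) $f(x,y)\to0$ as $x\to\infty$ and as $y\to\infty$; (A5) $f(x,y)\ge \lambda_1(1-(x+y))+d_1$ for all $x,y\ge0$, where $\lambda_1:=r_1-d_1>0$. Put $\phi(x,y):=f(x,y)-d_1$. For each integer $n\ge1$ let $K=K(n):=kn$ and let $(y_0,y_1,y_\beta)$ solve \[ \dot y_0=\lambda_0 y_0,\qquad \dot y_1=\phi(y_0,y_1)\,y_1+n^{-\alpha}y_0,\qquad \dot y_\beta=\phi(y_0,y_1)\,y_\beta, \] with $(y_0(0),y_1(0),y_\beta(0))=(n/K,\,n^\beta/K,\,n^\beta/K)$. Define the deterministic recurrence time $\zeta_n:=\inf\{t>0: y_1(t)=n/K\}$. *)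

(* Defs.v *)
From HB Require Import structures.
From mathcomp Require Import all_boot all_order all_algebra.
From mathcomp Require Import all_classical all_reals all_analysis.
Set Implicit Arguments. Unset Strict Implicit. Unset Printing Implicit Defensive.
Import Order.TTheory GRing.Theory Num.Theory.
Import numFieldNormedType.Exports.
Local Open Scope classical_set_scope.
Local Open Scope ring_scope.

Section Defs.
Variable R : realType.

Definition lipschitz_quadrant (f : R -> R -> R) : Prop :=
  exists L : R, forall x y x' y' : R, 0 <= x -> 0 <= y -> 0 <= x' -> 0 <= y' ->
    `|f x y - f x' y'| <= L * (`|x - x'| + `|y - y'|).

(* Standing assumptions (A1)-(A5) on f : [0,oo)^2 -> [0,oo), with d1 given;
   r1 := f 0 0 and lambda1 := r1 - d1. *)
Definition assumptions_f (f : R -> R -> R) (d1 : R) : Prop :=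
  [/\ (forall x y, 0 <= x -> 0 <= y -> 0 <= f x y) /\
      lipschitz_quadrant f,
      (forall x y, 0 <= x -> 0 <= y -> x + y = 0 -> f x y = f 0 0)
                 /\ (forall x y, 0 <= x -> 0 <= y -> x + y = 1 -> f x y = d1)
                 /\ d1 < f 0 0,
      (exists Phi : R -> R,
                   (forall s t, 0 <= s -> s <= t -> Phi t <= Phi s) /\
                   (forall x y, 0 <= x -> 0 <= y -> f x y = Phi (x + y))),
      (forall y, 0 <= y -> (fun x => f x y) @ +oo --> (0 : R))
                 /\ (forall x, 0 <= x -> (fun y => f x y) @ +oo --> (0 : R))
    & (forall x y, 0 <= x -> 0 <= y ->
                   (f 0 0 - d1) * (1 - (x + y)) + d1 <= f x y)].

Definition is_solution (lambda0 d1 alpha : R) (f : R -> R -> R) (n : nat)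
    (a0 a1 ab : R) (y0 y1 yb : R -> R) : Prop :=
  let phi := fun x y => f x y - d1 in
  [/\ y0 0 = a0, y1 0 = a1, yb 0 = ab,
      y0 x @[x --> 0^'+] --> y0 0 /\ y1 x @[x --> 0^'+] --> y1 0 /\
        yb x @[x --> 0^'+] --> yb 0
    & forall t : R, 0 < t ->
      [/\ is_derive t 1 y0 (lambda0 * y0 t),
          is_derive t 1 y1 (phi (y0 t) (y1 t) * y1 t
                            + (n%:R `^ (- alpha)) * y0 t)
        & is_derive t 1 yb (phi (y0 t) (y1 t) * yb t)]].

(* zeta := inf {t > 0 : y1 t = c}, as an extended real (+oo if the set is empty). *)
Definition recurrence_time (y1 : R -> R) (c : R) : \bar R :=
  ereal_inf [set t%:E | t in [set t : R | 0 < t /\ y1 t = c]].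

End Defs.

(* Main.v *)
Require Import Defs.
From HB Require Import structures.
From mathcomp Require Import all_boot all_order all_algebra.
From mathcomp Require Import all_classical all_reals all_analysis.
From mathcomp Require Import ring lra.
Import Order.TTheory GRing.Theory Num.Theory.
Import numFieldNormedType.Exports.
Local Open Scope classical_set_scope.
Local Open Scope ring_scope.


Lemma mvt_lb {R : realType} (g D : R -> R) (a b c : R) : a < b ->
  (forall t, a <= t <= b -> is_derive t 1 g (D t)) ->
  (forall t, a < t < b -> c <= D t) -> c * (b - a) <= g b - g a.
Proof.
move=> ab hd hc.
have hd' : forall x, x \in `]a, b[ -> is_derive x 1 g (D x).
  by move=> x xin; apply: hd; rewrite !ltW ?(itvP xin).
have cont : {within `[a, b], continuous g}.
  apply: derivable_within_continuous => x xin.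
  by move: xin; rewrite in_itv /= => /hd [].
have [x xab ->] := MVT ab hd' cont.
apply: ler_wpM2r; first by rewrite subr_ge0 ltW.
by apply: hc; move: xab; rewrite in_itv.
Qed.

Lemma cont_eps {R : realType} (h : R -> R) s : h @ s --> h s -> forall e, 0 < e ->
  exists2 d, 0 < d & forall t, `|s - t| < d -> `|h s - h t| < e.
Proof.
move=> /cvgrPdist_lt H e e0.
have /nbhs_ballP [d d0 hd] := H e e0.
exists d => // t st; exact: hd.
Qed.

Lemma deriv_pos_left {R : realType} (h : R -> R) (s D : R) : is_derive s 1 h D -> 0 < D ->
  exists2 d, 0 < d & forall t, s - d < t < s -> h t < h s.
Proof.
move=> [hd hv] D0.
have : (fun t => t^-1 *: ((h \o shift s) (t *: 1) - h s)) @ 0^' --> D.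
  by rewrite -hv; exact: hd.
move=> /cvgrPdist_lt /(_ D D0).
move=> /nbhs_ballP [d d0 {}hd].
exists d => // t /andP[t1 t2].
have : `|D - (t - s)^-1 *: ((h \o shift s) ((t - s) *: 1) - h s)| < D.
  apply: hd; last by rewrite subr_eq0 lt_eqF.
  rewrite /ball /= sub0r normrN ltr0_norm ?subr_lt0 //.
  by rewrite opprB ltrBlDr addrC -ltrBlDr.
rewrite /= scaler1 subrK => /ltr_normlP [_].
rewrite ltrBlDl ltrDr => q0.
rewrite -subr_lt0; move: q0; rewrite /GRing.scale /=.
have ts : t - s < 0 by rewrite subr_lt0.
by rewrite nmulr_rgt0 ?invr_lt0.
Qed.

Lemma derive_cont {R : realType} (h : R -> R) (t D : R) : is_derive t 1 h D -> h @ t --> h t.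
Proof.
move=> [hd _]; apply: differentiable_continuous.
by apply/derivable1_diffP.
Qed.

Lemma first_touch {R : realType} (h D : R -> R) (a b : R) : a <= b ->
  (forall t, a <= t <= b -> is_derive t 1 h (D t)) ->
  0 < h a -> (forall t, a < t <= b -> h t = 0 -> 0 < D t) ->
  forall t, a <= t <= b -> 0 < h t.
Proof.
move=> ab hd ha hD t1 /andP[at1 t1b].
rewrite ltNge; apply/negP => ht1.
set Z := [set u | a <= u <= t1 /\ h u <= 0].
have Zt1 : Z t1 by rewrite /Z /= at1 lexx.
have lbZ : lbound Z a by move=> u [/andP[]].
have hinf : has_inf Z by split; [exists t1 | exists a].
set s := inf Z.
have a_s : a <= s by apply: lb_le_inf => //; exists t1.
have st1 : s <= t1 by apply: ge_inf => //; exists a.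
have sb : s <= b by apply: le_trans t1b.
have pos : forall v, a <= v < s -> 0 < h v.
  move=> v /andP[av vs]; rewrite ltNge; apply/negP => hv.
  have : s <= v by apply: ge_inf; [exists a | split => //; rewrite av /= ltW // (lt_le_trans vs)].
  by rewrite leNgt vs.
have cs : h @ s --> h s by apply: derive_cont; apply: hd; rewrite a_s.
have hs_le : h s <= 0.
  rewrite leNgt; apply/negP => hs0.
  have [d d0 hd'] := cont_eps _ _ cs _ hs0.
  have [z Zz zlt] := inf_adherent d0 hinf.
  have sz : s <= z by apply: ge_inf => //; exists a.
  have := hd' z; rewrite distrC ger0_norm ?subr_ge0 // ltrBlDl zlt => /(_ isT).
  move=> /ltr_normlP [_]; rewrite ltrBlDr ltrDl => hz.
  by case: Zz => _; rewrite leNgt hz.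
have a_lt_s : a < s.
  rewrite lt_neqAle a_s andbT; apply/eqP => eas.
  by move: hs_le; rewrite -eas leNgt ha.
have sa0 : 0 < s - a by rewrite subr_gt0.
have hs_ge : 0 <= h s.
  rewrite leNgt; apply/negP => hs0.
  have hs0' : 0 < - h s by rewrite oppr_gt0.
  have [d d0 hd'] := cont_eps _ _ cs _ hs0'.
  set e := Num.min d (s - a).
  have e0 : 0 < e by rewrite lt_min d0 sa0.
  have e2 : e / 2 < e by rewrite ltr_pdivrMr // ltr_pMr // ltr1n.
  have vs : s - e / 2 < s by rewrite ltrBlDl ltrDr divr_gt0.
  have av : a <= s - e / 2.
    rewrite lerBrDl -lerBrDr; apply: le_trans (ltW e2) _.
    by rewrite ge_min lexx orbT.
  have dist : `|s - (s - e / 2)| < d.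
    have -> : s - (s - e / 2) = e / 2 by ring.
    rewrite ger0_norm ?divr_ge0 ?ltW //.
    by apply: lt_le_trans e2 _; rewrite ge_min lexx.
  have := hd' _ dist => /ltr_normlP [+ _].
  move=> H1; have hv : h (s - e / 2) < 0 by lra.
  have := pos (s - e / 2); rewrite av vs => /(_ isT).
  by rewrite ltNge (ltW hv).
have hs0 : h s = 0 by apply/eqP; rewrite eq_le hs_le hs_ge.
have Ds : 0 < D s by apply: hD => //; rewrite a_lt_s.
have hds : is_derive s 1 h (D s) by apply: hd; rewrite a_s sb.
have [d d0 hd'] := deriv_pos_left _ _ _ hds Ds.
set e := Num.min d (s - a).
have e0 : 0 < e by rewrite lt_min d0 sa0.
have e2 : e / 2 < e by rewrite ltr_pdivrMr // ltr_pMr // ltr1n.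
have ed : e <= d by rewrite ge_min lexx.
have esa : e <= s - a by rewrite ge_min lexx orbT.
have := pos (s - e / 2); have := hd' (s - e / 2).
have -> : s - d < s - e / 2 < s by apply/andP; split; lra.
have -> : a <= s - e / 2 < s by apply/andP; split; lra.
move=> /(_ isT) H1 /(_ isT); lra.
Qed.

Lemma right_eps {R : realType} (h : R -> R) l : h x @[x --> 0^'+] --> l -> forall e, 0 < e ->
  exists2 d, 0 < d & forall t, 0 < t < d -> `|l - h t| < e.
Proof.
move=> /cvgrPdist_lt H e e0.
have /nbhs_ballP [d d0 hd] := H e e0.
exists d => // t /andP[t0 td]; apply: hd => //.
by rewrite /ball /= sub0r normrN gtr0_norm.
Qed.

Lemma const_lim {R : realType} (g : R -> R) (v l : R) : (forall t, 0 < t -> g t = v) ->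
  g x @[x --> 0^'+] --> l -> v = l.
Proof.
move=> gv gl.
have : (fun _ : R => v) x @[x --> 0^'+] --> l.
  apply: cvg_trans gl; apply: near_eq_cvg; near=> x.
  rewrite gv //; near: x; exact: nbhs_right_gt.
move=> H; rewrite -(cvg_lim _ H) ?lim_cst //; exact: Rhausdorff.
Unshelve. all: by end_near.
Qed.

Lemma deriv0_const {R : realType} (g : R -> R) : (forall t : R, 0 < t -> is_derive t 1 g 0) ->
  forall s t, 0 < s -> 0 < t -> g s = g t.
Proof.
move=> hg.
suff H : forall s t, 0 < s -> s < t -> g s = g t.
  move=> s t s0 t0; case: (ltgtP s t) => [st|ts|->] //.
  - exact: H.
  - by apply/esym/H.
move=> s t s0 st.
have h1 := mvt_lb g (fun _ => 0) s t 0 st.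
have h2 := mvt_lb (fun x => - g x) (fun _ => 0) s t 0 st.
have hd : forall u, s <= u <= t -> is_derive u 1 g 0.
  by move=> u /andP[su _]; apply: hg; apply: lt_le_trans su.
have e1 := h1 hd (fun _ _ => lexx 0).
have e2 : 0 * (t - s) <= - g t - - g s.
  apply: h2 => // u hu; apply: is_derive_eq; first by apply: is_deriveN; apply: hd.
  by rewrite oppr0.
move: e1 e2; rewrite !mul0r; lra.
Qed.

Lemma dlin {R : realType} (l t : R) : is_derive t 1 (fun x => l * x) l.
Proof.
have := @is_deriveZ R R R id l t 1 1 (is_derive_id _ _).
by rewrite /GRing.scale /= mulr1.
Qed.

Lemma dexp {R : realType} (l t : R) : is_derive t 1 (fun x => expR (l * x)) (expR (l * t) * l).
Proof.
exact: (@is_derive1_comp R expR (fun x => l * x) t _ _ (is_derive_expR _) (dlin l t)).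
Qed.

Lemma dmul {R : realType} (f g : R -> R) (t df dg : R) : is_derive t 1 f df -> is_derive t 1 g dg ->
  is_derive t 1 (fun x => f x * g x) (f t * dg + g t * df).
Proof. move=> H1 H2; exact: (is_deriveM H1 H2). Qed.

Lemma dln {R : realType} (f : R -> R) (t df : R) : 0 < f t -> is_derive t 1 f df ->
  is_derive t 1 (fun x => ln (f x)) ((f t)^-1 * df).
Proof. move=> H1 H2; exact: (is_derive1_comp (is_derive1_ln H1) H2). Qed.

Lemma dadd {R : realType} (f g : R -> R) (t df dg : R) : is_derive t 1 f df -> is_derive t 1 g dg ->
  is_derive t 1 (fun x => f x + g x) (df + dg).
Proof. move=> H1 H2; exact: (is_deriveD H1 H2). Qed.

Lemma dsub {R : realType} (f g : R -> R) (t df dg : R) : is_derive t 1 f df -> is_derive t 1 g dg ->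
  is_derive t 1 (fun x => f x - g x) (df - dg).
Proof. move=> H1 H2; exact: (is_deriveB H1 H2). Qed.

Lemma dscal {R : realType} (f : R -> R) (l t df : R) : is_derive t 1 f df ->
  is_derive t 1 (fun x => l * f x) (l * df).
Proof. move=> H1; exact: (is_deriveZ l H1). Qed.

Lemma alg1 {R : realType} (l a Y0 y : R) : 0 < l -> Y0 <= (1 - a) / 2 -> y < a ->
  l * (1 - a) / 2 <= l * (1 - (Y0 + y)).
Proof. move=> l0 h1 h2; rewrite -mulrA ler_pM2l //; lra. Qed.

Lemma alg2 {R : realType} (l phi y Y0 A B C : R) : l * y <= C -> 0 <= A -> 0 <= B ->
  l * (1 - (Y0 + y)) <= phi -> l <= phi + A + C + B + l * Y0.
Proof. move=> *; lra. Qed.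

Theorem lemmaA1 (R : realType) (r0 d0 d1 k alpha beta : R) (f : R -> R -> R) :
  0 <= r0 -> 0 <= d0 -> r0 - d0 < 0 -> 0 < d1 -> 1 < k ->
  0 < alpha < 1 -> 0 < beta < 1 ->
  assumptions_f f d1 ->
  exists C : R, 0 < C /\
  exists N : nat, forall n : nat, (N <= n)%N ->
    forall y0 y1 yb : R -> R,
      is_solution (r0 - d0) d1 alpha f n
        (n%:R / (k * n%:R)) (n%:R `^ beta / (k * n%:R)) (n%:R `^ beta / (k * n%:R))
        y0 y1 yb ->
      (recurrence_time y1 (n%:R / (k * n%:R))
        < (C + Num.min (1 - beta) alpha / (f 0 0 - d1) * ln (n%:R : R))%:E)%E.
Proof.
move=> r0_ge0 d0_ge0 lam0_lt0 d1_gt0 k1 /andP[al0 al1] /andP[be0 be1].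
move=> [[fpos _] [_ [_ d1lt]] _ _ A5].
set lam0 := r0 - d0 in lam0_lt0 *.
set lam1 := f 0 0 - d1 in A5 *.
have lam1_gt0 : 0 < lam1 by rewrite subr_gt0.
have k0 : 0 < k by apply: lt_trans k1.
set a := k^-1.
have a0 : 0 < a by rewrite invr_gt0.
have a1 : a < 1 by rewrite invf_lt1.
have a1' : 0 < 1 - a by rewrite subr_gt0.
have nl0 : 0 < - lam0 by rewrite oppr_gt0.
set t0 := 1 + 2 / ((1 - a) * (- lam0)).
have t0_1 : 1 <= t0 by rewrite lerDl divr_ge0 // mulr_ge0 // ltW.
have t0_0 : 0 < t0 by apply: lt_le_trans t0_1.
have E0 : expR (lam0 * t0) <= (1 - a) / 2.
  have H1 : 2 / (1 - a) <= expR (- (lam0 * t0)).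
    apply: le_trans (expR_ge1Dx _).
    have -> : - (lam0 * t0) = - lam0 + 2 / (1 - a).
      have hl : lam0 != 0 by rewrite lt_eqF.
      have ha' : 1 - a != 0 by rewrite lt0r_neq0.
      rewrite /t0; field; rewrite hl ha' //.
    by rewrite addrA lerDr addr_ge0 // ltW.
  rewrite expRN in H1.
  have e0 := expR_gt0 (lam0 * t0).
  rewrite -(invrK ((1 - a) / 2)) -(lef_pV2 _ _) ?posrE ?invr_gt0 ?divr_gt0 //.
  by rewrite invrK invf_div.
set b := a * expR (lam0 * t0).
have b0 : 0 < b by rewrite mulr_gt0 // expR_gt0.
set c := lam1 * (1 - a) / 2.
have c0 : 0 < c by rewrite divr_gt0 // mulr_gt0.
set K := c^-1.
have K0 : 0 < K by rewrite invr_gt0.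
set m := Num.min (1 - beta) alpha.
have m0 : 0 < m by rewrite lt_min subr_gt0 be1 al0.
set L := Num.min (ln a - ln 2) (ln (b * t0 / 2)).
set K2 := ln a + K * lam1 * a - lam1 * a / lam0 + d1 * t0 - L.
exists (t0 + (`|K2| + 1) / lam1 + 1); split.
  by rewrite addr_gt0 // addr_gt0 // divr_gt0 // ltr_pwDl.
exists 2%N => n n2 y0 y1 yb [h00 h10 _ [cy0 [cy1 _]] hder].
set nR := n%:R.
have n1 : 1 < nR by rewrite /nR ltr1n.
have n0 : 0 < nR by apply: lt_trans n1.
have ha : nR / (k * nR) = a by rewrite invfM mulrCA mulfV ?mulr1 // lt0r_neq0.
rewrite ha in h00 *.
set P := nR `^ (- alpha).
have P0 : 0 < P by rewrite powR_gt0.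
have lnn : 0 < ln nR by rewrite ln_gt0.
set T := t0 + (m * ln nR + `|K2| + 1) / lam1.
suff [t [/andP[t_gt0 tT] y1t]] : exists t, 0 < t <= T /\ y1 t = a.
  apply: (@le_lt_trans _ _ t%:E).
    by apply: ereal_inf_lbound; exists t.
  rewrite lte_fin; apply: le_lt_trans tT _.
  rewrite /T !mulrDl [m / lam1 * _]mulrAC; clear; lra.
have hd0 : forall t : R, 0 < t -> is_derive t 1 y0 (lam0 * y0 t).
  by move=> t /hder [].
have hd1 : forall t : R, 0 < t ->
    is_derive t 1 y1 ((f (y0 t) (y1 t) - d1) * y1 t + P * y0 t).
  by move=> t /hder [].
have y0E : forall t : R, 0 < t -> y0 t = a * expR (lam0 * t).
  pose g := fun t => y0 t * expR (- lam0 * t).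
  have gd : forall t : R, 0 < t -> is_derive t 1 g 0.
    move=> t t_gt0; apply: is_derive_eq; first exact: dmul (hd0 t t_gt0) (dexp _ _).
    by rewrite /=; ring.
  have gc := deriv0_const g gd.
  have gl : g x @[x --> 0^'+] --> y0 0 * expR (- lam0 * 0).
    apply: cvgM => //; apply: cvg_at_right_filter.
    exact: derive_cont (dexp _ _).
  rewrite h00 mulr0 expR0 mulr1 in gl.
  have ga : g 1 = a.
    by apply: (const_lim g (g 1) a) => // t t_gt0; exact: gc t 1 t_gt0 ltr01.
  move=> t t_gt0.
  have := gc t 1 t_gt0 ltr01; rewrite ga /g => <-.
  by rewrite -mulrA -expRD mulNr addNr expR0 mulr1.
have y0pos : forall t : R, 0 < t -> 0 < y0 t.
  by move=> t /y0E ->; rewrite mulr_gt0 // expR_gt0.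
set y10 := y1 0.
have knR : 0 < k * nR by rewrite mulr_gt0.
have nb : 0 < nR `^ beta by rewrite powR_gt0.
have y10_0 : 0 < y10 by rewrite /y10 h10 divr_gt0.
have lny10 : ln y10 = (beta - 1) * ln nR + ln a.
  rewrite /y10 h10 ln_div ?posrE // lnM ?posrE // ln_powR /a lnV ?posrE //.
  ring.
have y10_a : y10 < a.
  rewrite -ltr_ln ?posrE // lny10.
  have : (beta - 1) * ln nR < 0 by rewrite nmulr_rlt0 ?subr_lt0.
  clear; lra.
have e0 : 0 < Num.min (y10 / 2) (a - y10).
  by rewrite lt_min divr_gt0 //= subr_gt0.
have [d1' d1'0 hd1'] := right_eps y1 y10 cy1 _ e0.
have near0 : forall t : R, 0 < t < d1' -> y10 / 2 < y1 t < a.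
  move=> t /hd1' /ltr_normlP []; rewrite !lt_min => /andP[H1 H2] /andP[H3 H4].
  apply/andP; split; clear -H1 H2 H3 H4; lra.
have y1pos : forall t : R, 0 < t -> 0 < y1 t.
  move=> t t_gt0; case: (ltP t d1') => [td|dt].
    have /andP[H _] := near0 t ltac:(by rewrite t_gt0 td); clear -H y10_0; lra.
  have hdI : forall s : R, d1' / 2 <= s <= t -> is_derive s 1 y1
      ((f (y0 s) (y1 s) - d1) * y1 s + P * y0 s).
    by move=> s /andP[hs _]; apply: hd1; apply: lt_le_trans hs; rewrite divr_gt0.
  apply: (first_touch y1 _ (d1' / 2) t _ hdI _ _ t).
  - clear -dt d1'0; lra.
  - have h2 : 0 < d1' / 2 < d1' by apply/andP; split; [rewrite divr_gt0 // | clear -d1'0; lra].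
    have /andP[H _] := near0 _ h2; clear -H y10_0; lra.
  - move=> s /andP[hs _] ->; rewrite mulr0 add0r mulr_gt0 // y0pos //.
    by apply: lt_trans hs; rewrite divr_gt0.
  - apply/andP; split; [clear -dt d1'0; lra | by []].
set eps := Num.min d1' t0 / 2.
have eps0 : 0 < eps by rewrite divr_gt0 // lt_min d1'0 t0_0.
have eps_d : eps < d1'.
  have : Num.min d1' t0 <= d1' by rewrite ge_min lexx.
  rewrite /eps; clear -d1'0; lra.
have eps_t : eps <= t0 / 2.
  have : Num.min d1' t0 <= t0 by rewrite ge_min lexx orbT.
  rewrite /eps; clear -t0_0; lra.
pose G := fun t => expR (d1 * t) * y1 t - P * b * t.
pose DG := fun t => (expR (d1 * t) * ((f (y0 t) (y1 t) - d1) * y1 t + P * y0 t)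
   + y1 t * (expR (d1 * t) * d1)) - P * b.
have Gmono : 0 * (t0 - eps) <= G t0 - G eps.
  apply: (mvt_lb G DG eps t0 0); first by clear -eps_t t0_0; lra.
    move=> t /andP[et _]; apply: dsub; last exact: dlin.
    apply: dmul; first exact: dexp.
    by apply: hd1; apply: lt_le_trans et.
  move=> t /andP[et tt0].
  have t_gt0 : 0 < t by apply: lt_trans et.
  have E1 : 1 <= expR (d1 * t) by rewrite -expR0 ler_expR mulr_ge0 // ltW.
  have F0 : 0 <= f (y0 t) (y1 t) by rewrite fpos // ltW ?y0pos ?y1pos.
  have y0b : b <= y0 t.
    rewrite y0E // /b ler_pM2l // ler_expR.
    by rewrite ler_wnM2l // ltW.
  have H1 : 0 <= expR (d1 * t) * f (y0 t) (y1 t) * y1 t.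
    by rewrite mulr_ge0 // ?mulr_ge0 // ltW // ?y1pos // (lt_le_trans ltr01).
  have H2 : y0 t <= expR (d1 * t) * y0 t by rewrite ler_peMl // ltW // y0pos.
  have H3 : 0 <= P * (expR (d1 * t) * y0 t - b).
    by apply: mulr_ge0; [exact: ltW | rewrite subr_ge0 (le_trans y0b)].
  have -> : DG t = expR (d1 * t) * f (y0 t) (y1 t) * y1 t
      + P * (expR (d1 * t) * y0 t - b) by rewrite /DG; ring.
  clear -H1 H3; lra.
rewrite mul0r /G in Gmono.
have yeps : y10 / 2 < y1 eps.
  have /andP[H _] := near0 eps ltac:(by rewrite eps0 eps_d); exact: H.
have Ee : 1 <= expR (d1 * eps) by rewrite -expR0 ler_expR mulr_ge0 // ltW.
have Y1 : y10 / 2 <= expR (d1 * t0) * y1 t0.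
  have : y1 eps <= expR (d1 * eps) * y1 eps.
    by rewrite ler_peMl // ltW // y1pos.
  have : 0 < P * b * eps by apply: mulr_gt0 => //; apply: mulr_gt0.
  have : P * b * eps <= P * b * t0.
    by apply: ler_wpM2l; [apply: ltW; apply: mulr_gt0 | clear -eps_t t0_0; lra].
  clear -Gmono yeps; lra.
have Y2 : P * (b * t0 / 2) <= expR (d1 * t0) * y1 t0.
  have : 0 < expR (d1 * eps) * y1 eps by apply: mulr_gt0; [exact: expR_gt0 | exact: y1pos].
  have : P * b * (t0 / 2) <= P * b * (t0 - eps).
    by apply: ler_wpM2l; [apply: ltW; apply: mulr_gt0 | clear -eps_t; lra].
  have -> : P * (b * t0 / 2) = P * b * (t0 / 2) by ring.
  clear -Gmono; lra.
have yt0 : 0 < y1 t0 by apply: y1pos.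
have lnlow : forall X : R, 0 < X -> X <= expR (d1 * t0) * y1 t0 ->
    - (d1 * t0) + ln X <= ln (y1 t0).
  move=> X X0 HX.
  have -> : y1 t0 = expR (- (d1 * t0)) * (expR (d1 * t0) * y1 t0).
    by rewrite mulrA -expRD addNr expR0 mul1r.
  have Ep : 0 < expR (d1 * t0) * y1 t0 by apply: mulr_gt0 => //; exact: expR_gt0.
  rewrite lnM ?posrE ?expR_gt0 //.
  rewrite expRK lerD2l.
  by rewrite ler_ln ?posrE.
have L1 := lnlow _ (divr_gt0 y10_0 (ltr0n _ 2)) Y1.
have L2 := lnlow _ (mulr_gt0 P0 (divr_gt0 (mulr_gt0 b0 t0_0) (ltr0n _ 2))) Y2.
rewrite ln_div ?posrE // lny10 in L1.
have bt0 : 0 < b * t0 / 2 by rewrite divr_gt0 // mulr_gt0.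
have lnP : ln P = - alpha * ln nR by rewrite /P ln_powR.
have lnX : ln (P * (b * t0 / 2)) = ln P + ln (b * t0 / 2).
  by rewrite lnM // posrE.
rewrite lnX lnP in L2.
have Lle1 : L <= ln a - ln 2 by rewrite ge_min lexx.
have Lle2 : L <= ln (b * t0 / 2) by rewrite ge_min lexx orbT.
have lnt0 : - (d1 * t0) - m * ln nR + L <= ln (y1 t0).
  have [mE|mE] : m = 1 - beta \/ m = alpha.
    by rewrite /m /Num.min; case: ifP => _; [left|right].
  - rewrite mE; clear -L1 Lle1; lra.
  - rewrite mE; clear -L2 Lle2; lra.
have T_t0 : t0 < T.
  rewrite /T ltrDl divr_gt0 //.
  have : 0 < m * ln nR by rewrite mulr_gt0.
  have : 0 <= `|K2| by [].
  clear; lra.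
case: (pselect (exists t, 0 < t <= T /\ y1 t = a)) => // nohit.
exfalso.
have below : forall t : R, 0 < t <= T -> y1 t < a.
  move=> t /andP[t_gt0 tT]; rewrite ltNge; apply/negP => ge.
  set e' := Num.min d1' t / 2.
  have e'0 : 0 < e' by rewrite divr_gt0 // lt_min d1'0 t_gt0.
  have e'd : e' < d1'.
    have : Num.min d1' t <= d1' by rewrite ge_min lexx.
    rewrite /e'; clear -d1'0; lra.
  have e't : e' <= t.
    have : Num.min d1' t <= t by rewrite ge_min lexx orbT.
    rewrite /e'; clear -t_gt0; lra.
  have /andP[_ ye'] := near0 e' ltac:(by rewrite e'0 e'd).
  have cont : {within `[e', t], continuous y1}.
    apply: derivable_within_continuous => x; rewrite in_itv /= => /andP[ex _].
    by have [] := hd1 x (lt_le_trans e'0 ex).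
  have mm : Num.min (y1 e') (y1 t) <= a <= Num.max (y1 e') (y1 t).
    by rewrite ge_min ltW //= le_max ge orbT.
  have [x xin yx] := IVT e't cont mm.
  apply: nohit; exists x; split => //.
  move: xin; rewrite in_itv /= => /andP[ex xt].
  by rewrite (lt_le_trans e'0 ex) (le_trans xt tT).
pose D1 := fun t => (f (y0 t) (y1 t) - d1) * y1 t + P * y0 t.
pose W := fun t => ln (y1 t) + K * lam1 * y1 t + lam1 * a / lam0 * expR (lam0 * t).
pose DW := fun t => (y1 t)^-1 * D1 t + K * lam1 * D1 t
   + lam1 * a / lam0 * (expR (lam0 * t) * lam0).
have lam0n : lam0 != 0 by rewrite lt_eqF.
have Kc : K * c = 1 by rewrite /K mulVf // lt0r_neq0.
have Wmono : lam1 * (T - t0) <= W T - W t0.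
  apply: (mvt_lb W DW t0 T lam1 T_t0).
    move=> t /andP[tt _].
    have t_gt0 : 0 < t by apply: lt_le_trans tt.
    apply: dadd; last exact: dscal (dexp _ _).
    apply: dadd; last exact: dscal (hd1 _ t_gt0).
    exact: dln (y1pos _ t_gt0) (hd1 _ t_gt0).
  move=> t /andP[tt tT].
  have t_gt0 : 0 < t by apply: lt_trans tt.
  have yp := y1pos _ t_gt0.
  have ya : y1 t < a by apply: below; rewrite t_gt0 ltW.
  have Y0p := y0pos _ t_gt0.
  have Y0s : y0 t <= (1 - a) / 2.
    rewrite y0E //; apply: le_trans E0.
    apply: le_trans (_ : expR (lam0 * t) <= _).
      by rewrite ger_pMl ?expR_gt0 // ltW.
    by rewrite ler_expR ler_wnM2l // ltW.
  have A5t := A5 _ _ (ltW Y0p) (ltW yp).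
  set F := f (y0 t) (y1 t) in A5t *.
  have phic : c <= F - d1.
    apply: le_trans (alg1 _ _ _ _ lam1_gt0 Y0s ya) _.
    by rewrite lerBrDr.
  have H1 : lam1 * y1 t <= K * lam1 * ((F - d1) * y1 t).
    have : K * lam1 * (c * y1 t) <= K * lam1 * ((F - d1) * y1 t).
      by rewrite ler_pM2l ?mulr_gt0 // ler_pM2r.
    have -> : K * lam1 * (c * y1 t) = lam1 * y1 t * (K * c) by ring.
    by rewrite Kc mulr1.
  have H2 : 0 <= P * y0 t / y1 t.
    by apply: divr_ge0; [apply: mulr_ge0; apply: ltW | apply: ltW].
  have H3 : 0 <= K * lam1 * (P * y0 t).
    by apply: mulr_ge0; apply: mulr_ge0; apply: ltW.
  have -> : DW t = (F - d1) + P * y0 t / y1 t + K * lam1 * ((F - d1) * y1 t)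
      + K * lam1 * (P * y0 t) + lam1 * y0 t.
    rewrite /DW /D1 -/F y0E //; field.
    by rewrite lam0n lt0r_neq0.
  apply: (alg2 _ _ _ _ _ _ _ H1 H2 H3).
  by rewrite lerBrDr.
have T0 : 0 < T by apply: lt_trans T_t0.
have yT : y1 T < a by apply: below; rewrite T0 lexx.
have yTp := y1pos _ T0.
have q0 : lam1 * a / lam0 < 0.
  by rewrite nmulr_llt0 ?invr_lt0 //; apply: mulr_gt0.
have WT : W T <= ln a + K * lam1 * a.
  have h1 : ln (y1 T) <= ln a by rewrite ler_ln ?posrE // ltW.
  have h2 : K * lam1 * y1 T <= K * lam1 * a.
    by rewrite ler_pM2l ?mulr_gt0 // ltW.
  have h3 : lam1 * a / lam0 * expR (lam0 * T) <= 0.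
    by rewrite nmulr_rle0 // ltW // expR_gt0.
  rewrite /W; clear -h1 h2 h3; lra.
have Wt0 : ln (y1 t0) + lam1 * a / lam0 <= W t0.
  have h2 : 0 <= K * lam1 * y1 t0.
    by apply: mulr_ge0; [apply: mulr_ge0; apply: ltW | apply: ltW].
  have h3 : lam1 * a / lam0 <= lam1 * a / lam0 * expR (lam0 * t0).
    rewrite ler_nMr // expR_le1 nmulr_rle0 // ltW //.
  rewrite /W; clear -h2 h3; lra.
have lamT : lam1 * (T - t0) = m * ln nR + `|K2| + 1.
  rewrite /T addrC addKr mulrC divfK //.
  by rewrite lt0r_neq0.
have nK2 : K2 <= `|K2| by apply: ler_norm.
move: Wmono; rewrite lamT /K2 in nK2 *.
clear -WT Wt0 lnt0 nK2; lra.
Qed.
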